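(* Let $0<\mu\le L$ and $C>0$. Let $f_1,f_2,\dots:\mathbb{R}^d\to\mathbb{R}$ be differentiable functions, each $L$-smooth and $\mu$-strongly convex, whose minimizers $\mathbf{w}^*_t=\arg\min_{\mathbf{w}} f_t(\mathbf{w})$ satisfy $\|\mathbf{w}^*_t\|\le C$ for all $t\ge1$. For each $t\ge1$ let weights $a_1(t),\dots,a_t(t)\in[0,1]$ satisfy $\sum_{i=1}^t a_i(t)=1$, let $F_t(\mathbf{w})=\sum_{i=1}^t a_i(t)f_i(\mathbf{w})$ and $\overline{\mathbf{w}}^*_t=\arg\min_{\mathbf{w}}F_t(\mathbf{w})$. Then for all $t\ge1$, $$\|\overline{\mathbf{w}}^*_t\|^2\le\frac{L}{\mu}C^2.$$
   Context: A function $f$ is $L$-smooth if $\|\nabla f(\mathbf{x})-\nabla f(\mathbf{y})\|\le L\|\mathbf{x}-\mathbf{y}\|$ for all $\mathbf{x},\mathbf{y}$, and $\mu$-strongly convex if $f(\mathbf{y})\ge f(\mathbf{x})+\nabla f(\mathbf{x})^\top(\mathbf{y}-\mathbf{x})+\frac{\mu}{2}\|\mathbf{y}-\mathbf{x}\|^2$ for all $\mathbf{x},\mathbf{y}$. *)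

(* Defs.v *)
From HB Require Import structures.
From mathcomp Require Import all_boot all_order all_algebra.
From mathcomp Require Import all_classical all_reals all_analysis.
Set Implicit Arguments. Unset Strict Implicit. Unset Printing Implicit Defensive.
Import Order.TTheory GRing.Theory Num.Theory.
Import numFieldNormedType.Exports.
Local Open Scope ring_scope.

Definition dotv (R : realType) (d : nat) (u v : 'rV[R]_d) : R :=
  \sum_(i < d) u 0 i * v 0 i.
Definition enorm (R : realType) (d : nat) (u : 'rV[R]_d) : R :=
  Num.sqrt (dotv u u).

Definition grad (R : realType) (d : nat) (f : 'rV[R]_d -> R) (x : 'rV[R]_d)
  : 'rV[R]_d := \row_(i < d) ('D_(delta_mx 0 i) f x).

Definition differentiable_everywhere (R : realType) (d : nat)
  (f : 'rV[R]_d -> R) : Prop := forall x, differentiable f x.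

Definition L_smooth (R : realType) (d : nat) (L : R) (f : 'rV[R]_d -> R) : Prop :=
  forall x y, enorm (grad f x - grad f y) <= L * enorm (x - y).

Definition strongly_convex (R : realType) (d : nat) (mu : R)
  (f : 'rV[R]_d -> R) : Prop :=
  forall x y, f y >= f x + dotv (grad f x) (y - x) + mu / 2 * enorm (y - x) ^+ 2.

Definition is_minimizer (R : realType) (d : nat) (f : 'rV[R]_d -> R)
  (w : 'rV[R]_d) : Prop := forall v, f w <= f v.

(* Main.v *)
Require Import Defs.
From mathcomp Require Import all_boot all_order all_algebra.
From mathcomp Require Import all_classical all_reals all_analysis.
From mathcomp Require Import ring lra.
Import Order.TTheory GRing.Theory Num.Theory.
Local Open Scope ring_scope.
Set Implicit Arguments. Unset Strict Implicit.

Section Vec.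
Variables (R : realType) (d : nat).
Implicit Types (u v w : 'rV[R]_d).

Lemma dotvDl u v w : dotv (u + v) w = dotv u w + dotv v w.
Proof. rewrite /dotv -big_split; apply: eq_bigr => i _; by rewrite !mxE mulrDl. Qed.
Lemma dotvZl s u w : dotv (s *: u) w = s * dotv u w.
Proof. rewrite /dotv mulr_sumr; apply: eq_bigr => i _; by rewrite !mxE mulrA. Qed.
Lemma dotvC u w : dotv u w = dotv w u.
Proof. rewrite /dotv; apply: eq_bigr => i _; ring. Qed.
Lemma dotvNl u w : dotv (- u) w = - dotv u w.
Proof. by rewrite -scaleN1r dotvZl mulN1r. Qed.
Lemma dotvBl u v w : dotv (u - v) w = dotv u w - dotv v w.
Proof. by rewrite dotvDl dotvNl. Qed.
Lemma dotvDr u v w : dotv w (u + v) = dotv w u + dotv w v.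
Proof. by rewrite dotvC dotvDl !(dotvC w). Qed.
Lemma dotvZr s u w : dotv w (s *: u) = s * dotv w u.
Proof. by rewrite dotvC dotvZl dotvC. Qed.
Lemma dotvNr u w : dotv w (- u) = - dotv w u.
Proof. by rewrite dotvC dotvNl dotvC. Qed.
Lemma dotv0l w : dotv 0 w = 0.
Proof. by rewrite -(scale0r 0) dotvZl mul0r. Qed.
Lemma dotv_ge0 u : 0 <= dotv u u.
Proof. by apply: sumr_ge0 => i _; rewrite -expr2 sqr_ge0. Qed.
Lemma enorm_ge0 u : 0 <= enorm u.
Proof. exact: sqrtr_ge0. Qed.
Lemma enorm_sq u : enorm u ^+ 2 = dotv u u.
Proof. by rewrite /enorm sqr_sqrtr // dotv_ge0. Qed.
Lemma enormZ s u : enorm (s *: u) = `|s| * enorm u.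
Proof.
rewrite /enorm dotvZl dotvZr mulrA -expr2 sqrtrM ?sqr_ge0 //.
by rewrite sqrtr_sqr.
Qed.
Lemma dotv0 u : dotv u u = 0 -> u = 0.
Proof.
move=> H; apply/rowP => i; rewrite mxE.
have : u 0 i * u 0 i = 0.
  apply: (@psumr_eq0P R _ predT (fun i => u 0 i * u 0 i)) => //.
  by move=> j _; rewrite -expr2 sqr_ge0.
by move/eqP; rewrite mulf_eq0 orbb => /eqP.
Qed.
Lemma CS u v : dotv u v <= enorm u * enorm v.
Proof.
set a := enorm u; set b := enorm v.
have ha : 0 <= a := enorm_ge0 u. have hb : 0 <= b := enorm_ge0 v.
have H := dotv_ge0 (b *: u - a *: v).
rewrite !(dotvBl, dotvDr, dotvNl, dotvNr, dotvZl, dotvZr) in H.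
rewrite (dotvC v u) -!enorm_sq -/a -/b in H.
have [ab0|abp] := eqVneq (a * b) 0.
  move/eqP: ab0; rewrite mulf_eq0 => /orP [] /eqP h.
  - have : u = 0 by apply: dotv0; rewrite -enorm_sq -/a h expr0n.
    by move=> ->; rewrite dotv0l h mul0r.
  - have : v = 0 by apply: dotv0; rewrite -enorm_sq -/b h expr0n.
    by move=> ->; rewrite dotvC dotv0l h mulr0.
have abq : 0 < a * b by rewrite lt_def abp mulr_ge0.
rewrite -(ler_pM2l abq); nra.
Qed.
Lemma enormN u : enorm (- u) = enorm u.
Proof. by rewrite -scaleN1r enormZ normrN normr1 mul1r. Qed.
End Vec.

Section Opt.
Variables (R : realType) (d : nat) (mu L : R) (f : 'rV[R]_d -> R).
Hypotheses (mu0 : 0 < mu) (muL : mu <= L) (sm : L_smooth L f)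
  (sc : strongly_convex mu f).

Lemma grad_min0 w : is_minimizer f w -> grad f w = 0.
Proof.
move=> hmin; set g := grad f w.
have L0 : 0 < L by apply: lt_le_trans muL.
set s := (2 * L)^-1.
have s0 : 0 < s by rewrite invr_gt0 mulr_gt0.
have sL : L * s = 2^-1 by rewrite /s invfM mulrCA divff ?mulr1 // gt_eqF.
set y := w - s *: g.
have h1 := sc y w.
rewrite (_ : w - y = s *: g) in h1; last by rewrite /y opprD opprK addrA subrr add0r.
have h2 := hmin y.
have h3 : 0 <= mu / 2 * enorm (s *: g) ^+ 2 by rewrite mulr_ge0 ?sqr_ge0 // divr_ge0 // ltW.
have h4 := CS (- (grad f y - g)) g.
rewrite enormN dotvNl in h4.
have h5 := sm y w.
rewrite (_ : y - w = (- s) *: g) in h5; last by rewrite /y addrAC subrr add0r scaleNr.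
rewrite enormZ normrN gtr0_norm // -/g in h5.
have h6 : dotv (grad f y) g = dotv (grad f y - g) g + dotv g g by rewrite dotvBl subrK.
rewrite dotvZr in h1.
have hE := enorm_ge0 g. rewrite -enorm_sq in h6.
have hN : enorm g ^+ 2 <= 0.
  have h7 : enorm (grad f y - g) * enorm g <= L * (s * enorm g) * enorm g by rewrite ler_wpM2r.
  rewrite mulrA sL in h7.
  have h8 : s * (enorm g ^+ 2 / 2) <= 0.
    have : s * dotv (grad f y) g <= 0 by lra.
    rewrite h6 => h9.
    have : s * (enorm g ^+ 2 / 2) <= s * (dotv (grad f y - g) g + enorm g ^+ 2).
      rewrite ler_pM2l //. nra.
    lra.
  rewrite pmulr_rle0 // in h8. lra.
apply: dotv0; rewrite -enorm_sq; apply/eqP; rewrite eq_le hN sqr_ge0 //.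
Qed.
End Opt.

Lemma lim_nat (R : realType) (A B c : R) :
  (forall n, (0 < n)%N -> A <= B + c / n%:R) -> A <= B.
Proof.
move=> H; apply/ler_addgt0Pr => e e0.
have [c0|c0] := lerP c 0.
  have := H 1%N isT; rewrite divr1; lra.
set n := (Num.trunc (c / e)).+1.
have hn := truncnS_gt (c / e); rewrite -/n in hn.
have n0 : (0 : R) < n%:R by rewrite ltr0n.
have := H n isT.
have q1 : c / n%:R * n%:R = c by rewrite divfK // gt_eqF.
have r1 : c / e * e = c by rewrite divfK // gt_eqF.
move: (c / n%:R) q1 => q q1.
move: (c / e) r1 hn => r r1 hn.
nra.
Qed.

Lemma lim_s (R : realType) (A B : R) :
  0 <= B -> (forall s, 0 < s < 1 -> (1 - s) * B <= A) -> B <= A.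
Proof.
move=> B0 H; rewrite leNgt; apply/negP => hAB.
have h : 0 < (2^-1 : R) < 1 by apply/andP; split; lra.
have hA := H _ h.
have Bp : 0 < B by nra.
have := H ((B - A) / (2 * B)).
have e : (B - A) / (2 * B) * (2 * B) = B - A by rewrite divfK // gt_eqF // mulr_gt0.
move: ((B - A) / (2 * B)) e => s e.
have s0 : 0 < s by nra.
have s1 : s < 1 by nra.
rewrite s0 s1 => /(_ isT); nra.
Qed.

Section Opt2.
Variables (R : realType) (d : nat) (mu L : R) (f : 'rV[R]_d -> R).
Hypotheses (mu0 : 0 < mu) (muL : mu <= L) (sm : L_smooth L f)
  (sc : strongly_convex mu f).

Lemma step w v s h : is_minimizer f w -> 0 <= s -> 0 <= h ->
  f (w + (s + h) *: v) - f (w + s *: v) <= L * (s + h) * h * enorm v ^+ 2.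
Proof.
move=> hmin s0 h0.
have g0 := grad_min0 mu0 muL sm sc hmin.
set y2 := w + (s + h) *: v; set y1 := w + s *: v.
have h1 := sc y2 y1.
rewrite (_ : y1 - y2 = (- h) *: v) in h1; last first.
  by rewrite /y1 /y2 opprD addrACA subrr add0r -scalerBl opprD addrA subrr add0r.
have h3 : 0 <= mu / 2 * enorm ((- h) *: v) ^+ 2 by rewrite mulr_ge0 ?sqr_ge0 // divr_ge0 // ltW.
rewrite dotvZr in h1.
have h4 := CS (grad f y2) v.
have h5 := sm y2 w.
rewrite g0 subr0 (_ : y2 - w = (s + h) *: v) in h5; last by rewrite /y2 addrAC subrr add0r.
rewrite enormZ ger0_norm ?addr_ge0 // in h5.
have hE := enorm_ge0 v.
have h6 : enorm (grad f y2) * enorm v <= L * (s + h) * enorm v * enorm v.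
  by rewrite ler_wpM2r // -mulrA.
have h7 : h * dotv (grad f y2) v <= h * (L * (s + h) * enorm v * enorm v).
  by rewrite ler_wpM2l //; apply: le_trans h6.
rewrite expr2; nra.
Qed.

Lemma descent w : is_minimizer f w -> f 0 - f w <= L / 2 * enorm w ^+ 2.
Proof.
move=> hmin.
set v := - w; set E := enorm v.
have ind : forall h, 0 <= h -> forall k : nat,
    f (w + (k%:R * h) *: v) - f w <= L * h ^+ 2 * E ^+ 2 * (k%:R * (k%:R + 1) / 2).
  move=> h h0; elim => [|k IH].
    by rewrite mul0r scale0r addr0 subrr !mul0r mulr0.
  have := step v hmin (s := k%:R * h) (h := h) _ h0.
  rewrite -natr1 mulrDl mul1r.
  have : 0 <= k%:R * h :> R by rewrite mulr_ge0.
  move=> kh /(_ kh) st.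
  have -> : L * h ^+ 2 * E ^+ 2 * ((k%:R + 1) * (k%:R + 1 + 1) / 2) =
     L * h ^+ 2 * E ^+ 2 * (k%:R * (k%:R + 1) / 2) + L * (k%:R * h + h) * h * E ^+ 2.
    by field.
  rewrite -/E in st; lra.
have E2 : E = enorm w by rewrite /E /v enormN.
apply: (@lim_nat _ _ _ (L / 2 * E ^+ 2)) => n n0.
have n0' : (n%:R : R) != 0 by rewrite pnatr_eq0 -lt0n.
have := ind (n%:R^-1) _ n; rewrite invr_ge0 ler0n => /(_ isT).
rewrite mulfV // scale1r /v subrr -E2.
have -> : L * n%:R^-1 ^+ 2 * E ^+ 2 * (n%:R * (n%:R + 1) / 2) =
   L / 2 * E ^+ 2 + L / 2 * E ^+ 2 / n%:R by field.
by [].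
Qed.
End Opt2.

Unset Implicit Arguments.
Theorem lemma2 (R : realType) (d : nat) (mu L C : R)
  (f : nat -> 'rV[R]_d -> R) (wstar : nat -> 'rV[R]_d)
  (a : nat -> nat -> R) (wbar : nat -> 'rV[R]_d) :
  0 < mu -> mu <= L -> 0 < C ->
  (forall t, (1 <= t)%N -> differentiable_everywhere (f t)) ->
  (forall t, (1 <= t)%N -> L_smooth L (f t)) ->
  (forall t, (1 <= t)%N -> strongly_convex mu (f t)) ->
  (forall t, (1 <= t)%N -> is_minimizer (f t) (wstar t)) ->
  (forall t, (1 <= t)%N -> enorm (wstar t) <= C) ->
  (forall t i, (1 <= i <= t)%N -> 0 <= a t i <= 1) ->
  (forall t, (1 <= t)%N -> \sum_(1 <= i < t.+1) a t i = 1) ->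
  (forall t, (1 <= t)%N ->
     is_minimizer (fun w => \sum_(1 <= i < t.+1) a t i * f i w) (wbar t)) ->
  forall t, (1 <= t)%N -> enorm (wbar t) ^+ 2 <= L / mu * C ^+ 2.
Proof.
move=> mu0 muL C0 _ sm sc hmin hC ha hsum hbar t t1.
set wb := wbar t.
set F := fun w => \sum_(1 <= i < t.+1) a t i * f i w.
have hF : forall v, F wb <= F v by apply: hbar.
have hs := hsum t t1.
have up : F 0 <= F wb + L / 2 * C ^+ 2.
  have : F 0 <= \sum_(1 <= i < t.+1) a t i * (f i wb + L / 2 * C ^+ 2).
    apply: ler_sum_nat => i /andP [i1 it].
    have hi : (1 <= i <= t)%N by rewrite i1 -ltnS.
    have /andP [a0 _] := ha t i hi.
    rewrite ler_wpM2l //.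
    have i1' : (1 <= i)%N by [].
    have D := descent mu0 muL (sm i i1') (sc i i1') (hmin i i1').
    have m := hmin i i1' wb.
    have c1 := hC i i1'.
    have c2 : enorm (wstar i) ^+ 2 <= C ^+ 2.
      have := enorm_ge0 (wstar i); nra.
    have L0 : 0 <= L / 2 by rewrite divr_ge0 // (le_trans (ltW mu0)).
    have : L / 2 * enorm (wstar i) ^+ 2 <= L / 2 * C ^+ 2 by rewrite ler_wpM2l.
    lra.
  have -> : \sum_(1 <= i < t.+1) a t i * (f i wb + L / 2 * C ^+ 2) =
            F wb + L / 2 * C ^+ 2 * \sum_(1 <= i < t.+1) a t i.
    rewrite /F mulr_sumr -big_split /=; apply: eq_bigr => i _; ring.
  by rewrite hs mulr1.
set B := enorm wb ^+ 2.
have B0 : 0 <= B by rewrite sqr_ge0.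
apply: lim_s => // s /andP [s0 s1].
set z := (1 - s) *: wb.
have gr : (1 - s) * F wb + s * F 0 >= F z + mu / 2 * s * (1 - s) * B.
  have : \sum_(1 <= i < t.+1) a t i * (f i z + mu / 2 * s * (1 - s) * B) <=
         \sum_(1 <= i < t.+1) a t i * ((1 - s) * f i wb + s * f i 0).
    apply: ler_sum_nat => i /andP [i1 it].
    have hi : (1 <= i <= t)%N by rewrite i1 -ltnS.
    have /andP [a0 _] := ha t i hi.
    rewrite ler_wpM2l //.
    have i1' : (1 <= i)%N by [].
    have h1 := sc i i1' z wb.
    have h2 := sc i i1' z 0.
    rewrite (_ : wb - z = s *: wb) in h1; last first.
      by rewrite /z scalerBl scale1r opprB addrCA subrr addr0.
    rewrite (_ : 0 - z = (- (1 - s)) *: wb) in h2; last by rewrite sub0r /z scaleNr.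
    rewrite !enormZ normrN !ger0_norm ?subr_ge0 ?(ltW s1) ?(ltW s0) // !dotvZr in h1 h2.
    rewrite -/B in h1 h2.
    rewrite !exprMn -/B in h1 h2.
    set G := dotv _ _ in h1 h2.
    have e1 : 0 <= 1 - s by rewrite subr_ge0 ltW.
    have h1' := ler_wpM2l e1 h1.
    have h2' := ler_wpM2l (ltW s0) h2.
    rewrite -/B in B0.
    nra.
  have -> : \sum_(1 <= i < t.+1) a t i * (f i z + mu / 2 * s * (1 - s) * B) =
            F z + mu / 2 * s * (1 - s) * B * \sum_(1 <= i < t.+1) a t i.
    rewrite /F mulr_sumr -big_split /=; apply: eq_bigr => i _; ring.
  have -> : \sum_(1 <= i < t.+1) a t i * ((1 - s) * f i wb + s * f i 0) =
            (1 - s) * F wb + s * F 0.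
    rewrite /F !mulr_sumr -big_split /=; apply: eq_bigr => i _; ring.
  by rewrite hs mulr1.
have hz := hF z.
have key : s * (mu * ((1 - s) * B)) <= s * (L * C ^+ 2) by nra.
rewrite ler_pM2l // in key.
by rewrite mulrAC ler_pdivlMr // mulrC.
Qed.
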